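(* Suppose $(P,n,a,b)$ is good. Then there exists $f\in\mathcal{B}$ whose initial part (the sum of its terms of degree at most $n$) is $P$, and such that $f$ has a zero of order at least two in $(a,b)$.
   Context: $\mathcal{B}=\{1+\sum_{k=1}^\infty a_k x^k : a_k\in\{-1,0,1\}\}$ and $\mathcal{B}_n$ is the set of polynomials $1+\sum_{k=1}^n a_kx^k$ with $a_k\in\{-1,0,1\}$. A quadruple $(P,n,a,b)$ is called good if $P\in\mathcal{B}_n$, $0.5<a<b<1$, $P(a)>a^{n+1}/(1-a)$, $P(b)>b^{n+1}/(1-b)$, $P(x)>0$ for all $x\in[a,b]$, and there exists $x\in(a,b)$ with $P(x)<x^{n+1}/(1-x)$. *)

(* Defs.v *)
From Stdlib Require Import Reals Lra Lia.
From Coquelicot Require Import Coquelicot.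
Open Scope R_scope.

Definition trit (c : R) : Prop := c = -1 \/ c = 0 \/ c = 1.

(* Coefficient sequences of elements of \mathcal{B}: 1 + sum_{k>=1} a_k x^k *)
Definition in_B (a : nat -> R) : Prop :=
  a 0%nat = 1 /\ (forall k : nat, (1 <= k)%nat -> trit (a k)).

Definition in_Bn (n : nat) (p : nat -> R) : Prop :=
  p 0%nat = 1 /\ (forall k : nat, (1 <= k <= n)%nat -> trit (p k))
  /\ (forall k : nat, (n < k)%nat -> p k = 0).

Definition peval (n : nat) (p : nat -> R) (x : R) : R :=
  sum_n (fun k => p k * x ^ k) n.

Definition fseries (a : nat -> R) (x : R) : R := PSeries a x.

Definition good (p : nat -> R) (n : nat) (a b : R) : Prop :=
  in_Bn n p /\ 0.5 < a /\ a < b /\ b < 1 /\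
  peval n p a > a ^ (n + 1) / (1 - a) /\
  peval n p b > b ^ (n + 1) / (1 - b) /\
  (forall x, a <= x <= b -> peval n p x > 0) /\
  (exists x, a < x < b /\ peval n p x < x ^ (n + 1) / (1 - x)).

(* Main.v *)
Require Import Defs.
From Stdlib Require Import Reals.
From Stdlib Require Import Lra Lia Arith Classical ClassicalEpsilon.
From Coquelicot Require Import Coquelicot.
Open Scope R_scope.

Definition bnd (d : nat -> R) : Prop := exists M, forall i, Rabs (d i) <= M.
Definition ind (k i : nat) : R := if Nat.leb k i then 1 else 0.
Definition ek (k i : nat) : R := if Nat.eqb i k then 1 else 0.

Lemma rad d x : bnd d -> Rabs x < 1 -> Rbar_lt (Rabs x) (CV_radius d).
Proof.
  intros [M HM] Hx.
  destruct (CV_radius_bounded d) as [Hub _].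
  apply Rbar_lt_le_trans with (Finite ((Rabs x + 1)/2)).
  - simpl; lra.
  - apply Hub. exists M. intros i.
    rewrite Rabs_mult, <- RPow_abs.
    assert (H0 : 0 <= Rabs x) by apply Rabs_pos.
    assert (H1 : Rabs ((Rabs x + 1) / 2) ^ i <= 1).
    { rewrite Rabs_pos_eq by lra. apply Rle_trans with (1 ^ i); [apply pow_incr; lra | rewrite pow1; lra]. }
    assert (0 <= Rabs (d i)) by apply Rabs_pos.
    assert (0 <= Rabs ((Rabs x + 1) / 2) ^ i) by (apply pow_le; apply Rabs_pos).
    specialize (HM i). nra.
Qed.

Lemma ex_ps d x : bnd d -> Rabs x < 1 -> ex_pseries d x.
Proof. intros; apply CV_radius_inside, rad; auto. Qed.

Lemma PS_add d e x : bnd d -> bnd e -> Rabs x < 1 ->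
  PSeries (fun i => d i + e i) x = PSeries d x + PSeries e x.
Proof.
  intros Hd He Hx. rewrite <- PSeries_plus by (apply ex_ps; auto).
  apply PSeries_ext; reflexivity.
Qed.

Lemma PS_sc c d x : PSeries (fun i => c * d i) x = c * PSeries d x.
Proof. rewrite <- PSeries_scal. apply PSeries_ext; reflexivity. Qed.

Lemma bnd_add d e : bnd d -> bnd e -> bnd (fun i => d i + e i).
Proof.
  intros [M HM] [N HN]; exists (M + N); intros i.
  eapply Rle_trans; [apply Rabs_triang|]. specialize (HM i); specialize (HN i); lra.
Qed.

Lemma bnd_sc c d : bnd d -> bnd (fun i => c * d i).
Proof.
  intros [M HM]; exists (Rabs c * M); intros i. rewrite Rabs_mult.
  apply Rmult_le_compat_l; [apply Rabs_pos| apply HM].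
Qed.

Lemma bnd_ind k : bnd (ind k).
Proof. exists 1; intros i; unfold ind; destruct (Nat.leb k i); rewrite ?Rabs_R1, ?Rabs_R0; lra. Qed.

Lemma bnd_ek k : bnd (ek k).
Proof. exists 1; intros i; unfold ek; destruct (Nat.eqb i k); rewrite ?Rabs_R1, ?Rabs_R0; lra. Qed.

Lemma PS_mono d e x : bnd d -> bnd e -> 0 <= x < 1 -> (forall i, d i <= e i) ->
  PSeries d x <= PSeries e x.
Proof.
  intros Hd He Hx Hle.
  assert (Hx' : Rabs x < 1) by (rewrite Rabs_pos_eq; lra).
  assert (Hb : bnd (fun i => e i + (-1) * d i)) by (apply bnd_add; auto; apply bnd_sc; auto).
  assert (E : PSeries (fun i => e i + (-1) * d i) x = PSeries e x - PSeries d x).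
  { rewrite PS_add; auto. rewrite PS_sc. ring. apply bnd_sc; auto. }
  assert (0 <= PSeries (fun i => e i + (-1) * d i) x).
  { rewrite <- (PSeries_const_0 x). unfold PSeries. apply Series_le.
    - intros k; split.
      + rewrite Rmult_0_l; lra.
      + rewrite Rmult_0_l. apply Rmult_le_pos. specialize (Hle k); lra. apply pow_le; lra.
    - generalize (ex_ps _ _ Hb Hx'). unfold ex_pseries. apply ex_series_ext.
      intros k. rewrite pow_n_pow. unfold scal; simpl. unfold mult; simpl. ring. }
  lra.
Qed.

Lemma PS_ind k x : 0 <= x < 1 -> PSeries (ind k) x = x ^ k / (1 - x).
Proof.
  intros Hx.
  rewrite (PSeries_decr_n_aux (ind k) k x).
  2:{ intros j Hj. unfold ind. destruct (Nat.leb_spec k j); [lia|reflexivity]. }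
  rewrite (PSeries_ext _ (fun _ => 1)).
  2:{ intros j. unfold PS_decr_n, ind. destruct (Nat.leb_spec k (k + j)); [reflexivity|lia]. }
  unfold PSeries. rewrite (Series_ext _ (fun j => x ^ j)) by (intros; ring).
  rewrite Series_geom by (rewrite Rabs_pos_eq; lra). reflexivity.
Qed.

Lemma PS_ek k x : 0 <= x < 1 -> PSeries (ek k) x = x ^ k.
Proof.
  intros Hx.
  assert (Hx' : Rabs x < 1) by (rewrite Rabs_pos_eq; lra).
  rewrite (PSeries_ext _ (fun i => ind k i + (-1) * ind (S k) i)).
  2:{ intros i. unfold ek, ind. destruct (Nat.eqb_spec i k); destruct (Nat.leb_spec k i);
      destruct (Nat.leb_spec (S k) i); try lia; ring. }
  rewrite PS_add; auto using bnd_ind, bnd_sc.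
  rewrite PS_sc, !PS_ind by auto. simpl. field. lra.
Qed.

Lemma PS_poly n p x : bnd p -> (forall k, (n < k)%nat -> p k = 0) -> Rabs x < 1 ->
  PSeries p x = peval n p x.
Proof.
  intros Hb Hz Hx.
  rewrite (PSeries_decr_n p n x) by (apply ex_ps; auto).
  rewrite (PSeries_ext (PS_decr_n p (S n)) (fun _ => 0)).
  2:{ intros j. unfold PS_decr_n. apply Hz. lia. }
  rewrite PSeries_const_0, Rmult_0_r, Rplus_0_r.
  unfold peval. rewrite sum_n_Reals. reflexivity.
Qed.

Lemma trit_b c : trit c -> -1 <= c <= 1.
Proof. unfold trit; lra. Qed.

Definition Adm (p : nat -> R) (n : nat) (a b : R) (g : nat -> R) : Prop :=
  (forall k, (k <= n)%nat -> g k = p k) /\ (forall k, (n < k)%nat -> trit (g k)) /\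
  (forall x, a <= x <= b -> 0 <= PSeries g x).

Lemma p_b n p : in_Bn n p -> forall i, -1 <= p i <= 1.
Proof.
  intros [H0 [Ht Hz]] i. destruct i as [|i]. rewrite H0; lra.
  destruct (le_lt_dec (S i) n). apply trit_b, Ht; lia. rewrite Hz by lia; lra.
Qed.

Lemma shape_b n p g : in_Bn n p -> (forall k, (k <= n)%nat -> g k = p k) ->
  (forall k, (n < k)%nat -> trit (g k)) -> forall i, -1 <= g i <= 1.
Proof.
  intros Hp H1 H2 i. destruct (le_lt_dec i n). rewrite H1 by auto. apply (p_b n p Hp).
  apply trit_b, H2; auto.
Qed.

Lemma bnd_of d : (forall i, -1 <= d i <= 1) -> bnd d.
Proof. intros H; exists 1; intros i; specialize (H i); apply Rabs_le; lra. Qed.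

Lemma sandwich n p g x : in_Bn n p -> (forall k, (k <= n)%nat -> g k = p k) ->
  (forall k, (n < k)%nat -> trit (g k)) -> 0 <= x < 1 ->
  peval n p x - x ^ (n + 1) / (1 - x) <= PSeries g x <= peval n p x + x ^ (n + 1) / (1 - x).
Proof.
  intros Hp H1 H2 Hx.
  assert (Hx' : Rabs x < 1) by (rewrite Rabs_pos_eq; lra).
  assert (Bp : bnd p) by (apply bnd_of, (p_b n p Hp)).
  assert (Bg : bnd g) by (apply bnd_of, (shape_b n p g Hp H1 H2)).
  destruct Hp as [Hp0 [Hpt Hpz]].
  rewrite <- (PS_poly n p x) by auto.
  rewrite Nat.add_1_r, <- PS_ind by auto.
  assert (E1 : PSeries (fun i => p i + (-1) * ind (S n) i) x = PSeries p x - PSeries (ind (S n)) x).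
  { rewrite PS_add, PS_sc; auto using bnd_ind, bnd_sc. ring. }
  assert (E2 : PSeries (fun i => p i + ind (S n) i) x = PSeries p x + PSeries (ind (S n)) x).
  { rewrite PS_add; auto using bnd_ind. }
  rewrite <- E1, <- E2.
  split; apply PS_mono; auto using bnd_add, bnd_sc, bnd_ind; intros i;
  unfold ind; destruct (Nat.leb_spec (S n) i).
  - rewrite Hpz by lia. assert (HH := trit_b _ (H2 i ltac:(lia))). lra.
  - rewrite H1 by lia; lra.
  - rewrite Hpz by lia. assert (HH := trit_b _ (H2 i ltac:(lia))). lra.
  - rewrite H1 by lia; lra.
Qed.

Definition stepP p n a b (g : nat -> R) (k : nat) (h : nat -> R) : Prop :=
  Adm p n a b h /\ (forall i, (i < k)%nat -> h i = g i) /\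
  (forall h', Adm p n a b h' -> (forall i, (i < k)%nat -> h' i = g i) -> h k <= h' k).

Lemma step_ex p n a b g k : Adm p n a b g -> exists h, stepP p n a b g k h.
Proof.
  intros Hg. destruct (le_lt_dec k n) as [Hk|Hk].
  - exists g. split; [auto|split; [auto|]]. intros h' Hh' _.
    destruct Hg as [Hg _]; destruct Hh' as [Hh' _]. rewrite Hg, Hh' by auto; lra.
  - destruct (classic (exists h', Adm p n a b h' /\ (forall i, (i < k)%nat -> h' i = g i) /\ h' k = -1))
      as [[h' [A1 [A2 A3]]]|N1].
    { exists h'. split; [auto|split; [auto|]]. intros h'' [_ [T _]] _.
      rewrite A3. apply trit_b, T; auto. }
    destruct (classic (exists h', Adm p n a b h' /\ (forall i, (i < k)%nat -> h' i = g i) /\ h' k = 0))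
      as [[h' [A1 [A2 A3]]]|N2].
    { exists h'. split; [auto|split; [auto|]]. intros h'' Hh'' Hag.
      rewrite A3. pose proof Hh'' as [_ [T _]]. destruct (T k Hk) as [E|[E|E]]; try lra.
      exfalso; apply N1; exists h''; auto. }
    exists g. split; [auto|split; [auto|]]. intros h'' Hh'' Hag.
    pose proof Hh'' as [_ [T _]]. destruct (T k Hk) as [E|[E|E]].
    + exfalso; apply N1; exists h''; auto.
    + exfalso; apply N2; exists h''; auto.
    + rewrite E. destruct Hg as [_ [Tg _]]. apply trit_b, Tg; auto.
Qed.

Definition step p n a b g k : nat -> R :=
  epsilon (inhabits (fun _ : nat => 0)) (stepP p n a b g k).

Fixpoint GG p n a b (g0 : nat -> R) (k : nat) : nat -> R :=
  match k with O => g0 | S k => step p n a b (GG p n a b g0 k) k end.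

Lemma GG_adm p n a b g0 : Adm p n a b g0 -> forall k, Adm p n a b (GG p n a b g0 k).
Proof.
  intros H0 k; induction k as [|k IH]; simpl; auto.
  unfold step. destruct (epsilon_spec (inhabits (fun _ : nat => 0)) (stepP p n a b (GG p n a b g0 k) k) (step_ex p n a b _ k IH)) as [A _].
  exact A.
Qed.

Lemma GG_spec p n a b g0 : Adm p n a b g0 -> forall k,
  stepP p n a b (GG p n a b g0 k) k (GG p n a b g0 (S k)).
Proof.
  intros H0 k. simpl. unfold step. apply epsilon_spec, step_ex, GG_adm, H0.
Qed.

Lemma GG_stable p n a b g0 : Adm p n a b g0 -> forall m k, (k <= m)%nat ->
  forall i, (i < k)%nat -> GG p n a b g0 m i = GG p n a b g0 k i.
Proof.
  intros H0 m; induction m as [|m IH]; intros k Hk i Hi.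
  - assert (k = 0%nat) by lia; subst; reflexivity.
  - destruct (Nat.eq_dec k (S m)) as [->|Hne]; [reflexivity|].
    destruct (GG_spec p n a b g0 H0 m) as [_ [Ag _]].
    rewrite Ag by lia. apply IH; lia.
Qed.

Lemma trit_m1 : trit (-1). Proof. left; reflexivity. Qed.

Theorem corollary3p2 (p : nat -> R) (n : nat) (a b : R) :
  good p n a b ->
  exists f : nat -> R,
    in_B f /\ (forall k : nat, (k <= n)%nat -> f k = p k) /\
    exists x0 : R, a < x0 < b /\ fseries f x0 = 0 /\ is_derive (fseries f) x0 0.
Proof.
  intros [Hp [Ha [Hab [Hb [HPa [HPb [Hpos [y [Hy Hyneg]]]]]]]]].
  assert (HI : forall x, a <= x <= b -> 0 <= x < 1) by (intros; lra).
  assert (HIa : forall x, a <= x <= b -> Rabs x < 1) by (intros; rewrite Rabs_pos_eq; lra).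
  assert (Bp : bnd p) by (apply bnd_of, (p_b n p Hp)).
  pose proof Hp as [Hp0 [Hpt Hpz]].
  set (g0 := fun i => p i + ind (S n) i).
  assert (A0 : Adm p n a b g0).
  { split; [|split].
    - intros k Hk. unfold g0, ind. destruct (Nat.leb_spec (S n) k); [lia|ring].
    - intros k Hk. unfold g0, ind. destruct (Nat.leb_spec (S n) k); [|lia].
      rewrite Hpz by lia. right; right; ring.
    - intros x Hx. unfold g0. rewrite PS_add by auto using bnd_ind.
      rewrite PS_ind by auto. rewrite (PS_poly n p x) by auto.
      specialize (Hpos x Hx). assert (0 <= x ^ S n / (1 - x)).
      { apply Rmult_le_pos. apply pow_le; lra. apply Rlt_le, Rinv_0_lt_compat; lra. }
      lra. }
  set (G := GG p n a b g0).
  set (c := fun i => G (S i) i).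
  assert (Cag : forall k i, (i < k)%nat -> G k i = c i).
  { intros k i Hi. unfold c, G. apply (GG_stable p n a b g0 A0); lia. }
  assert (Cmin : forall k h', Adm p n a b h' -> (forall i, (i < k)%nat -> h' i = c i) -> c k <= h' k).
  { intros k h' Hh Hag. destruct (GG_spec p n a b g0 A0 k) as [_ [_ M]].
    apply M; auto. intros i Hi. rewrite Hag by auto. symmetry; apply Cag; auto. }
  assert (GA : forall k, Adm p n a b (G k)) by (intros; apply GG_adm; auto).
  assert (C1 : forall k, (k <= n)%nat -> c k = p k).
  { intros k Hk. unfold c. destruct (GA (S k)) as [H _]. apply H; auto. }
  assert (C2 : forall k, (n < k)%nat -> trit (c k)).
  { intros k Hk. unfold c. destruct (GA (S k)) as [_ [H _]]. apply H; auto. }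
  assert (Cb : forall i, -1 <= c i <= 1) by (apply (shape_b n p c Hp C1 C2)).
  assert (Bc : bnd c) by (apply bnd_of; auto).
  assert (C3 : forall x, a <= x <= b -> 0 <= PSeries c x).
  { intros x Hx. destruct (Rle_lt_dec 0 (PSeries c x)) as [|Hneg]; auto. exfalso.
    pose proof (HI x Hx) as Hx1.
    set (eps := - PSeries c x * (1 - x) / 2).
    assert (Heps : 0 < eps) by (unfold eps; nra).
    destruct (pow_lt_1_zero x (HIa x Hx) eps Heps) as [N HN].
    specialize (HN N (le_n N)). rewrite Rabs_pos_eq in HN by (apply pow_le; lra).
    assert (Gb : forall i, -1 <= G N i <= 1).
    { destruct (GA N) as [H1 [H2 _]]. apply (shape_b n p _ Hp H1 H2). }
    assert (BG : bnd (G N)) by (apply bnd_of; auto).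
    assert (Hle : PSeries (fun i => G N i + (-2) * ind N i) x <= PSeries c x).
    { apply PS_mono; auto using bnd_add, bnd_sc, bnd_ind. intros i. unfold ind.
      destruct (Nat.leb_spec N i).
      - specialize (Gb i); specialize (Cb i); lra.
      - rewrite Cag by lia; lra. }
    rewrite PS_add, PS_sc, PS_ind in Hle by auto using bnd_sc, bnd_ind.
    destruct (GA N) as [_ [_ H3]]. specialize (H3 x Hx).
    assert (x ^ N / (1 - x) < eps / (1 - x)).
    { apply Rmult_lt_compat_r; [apply Rinv_0_lt_compat; lra | auto]. }
    assert (E : eps / (1 - x) = - PSeries c x / 2) by (unfold eps; field; lra).
    lra. }
  assert (Cadm : Adm p n a b c) by (split; [|split]; auto).
  assert (Csand : forall x, a <= x <= b ->
     peval n p x - x ^ (n + 1) / (1 - x) <= PSeries c x) by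
    (intros x Hx; apply (sandwich n p c x Hp C1 C2 (HI x Hx))).
  destruct (classic (exists x0, a <= x0 <= b /\ PSeries c x0 = 0)) as [[x0 [Hx0 Hz]] | Hno].
  - assert (Hax : a < x0).
    { destruct (Rle_lt_or_eq_dec a x0 (proj1 Hx0)) as [|E]; auto. subst x0.
      specialize (Csand a ltac:(lra)). lra. }
    assert (Hxb : x0 < b).
    { destruct (Rle_lt_or_eq_dec x0 b (proj2 Hx0)) as [|E]; auto. subst x0.
      specialize (Csand b ltac:(lra)). lra. }
    exists c. split; [|split].
    + split. rewrite C1 by lia; auto.
      intros k Hk. destruct (le_lt_dec k n). rewrite C1 by auto. apply Hpt; lia. apply C2; auto.
    + auto.
    + exists x0. split; [lra|]. unfold fseries. split; auto.
      assert (Hrad : Rbar_lt (Rabs x0) (CV_radius c)) by (apply rad; auto; apply HIa; lra).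
      pose proof (is_derive_PSeries c x0 Hrad) as HD.
      set (l := PSeries (PS_derive c) x0) in HD.
      assert (Hl : l = 0).
      { pose proof HD as HD'. apply is_derive_Reals in HD'.
        pose (pr := exist _ l HD' : derivable_pt (PSeries c) x0).
        pose proof (deriv_minimum (PSeries c) a b x0 pr Hax Hxb) as Hm.
        simpl in Hm. apply Hm. intros z H1 H2. rewrite Hz. apply C3; lra. }
      rewrite Hl in HD. exact HD.
  - exfalso.
    assert (Hp' : forall z, a <= z <= b -> 0 < PSeries c z).
    { intros z Hz. destruct (C3 z Hz) as [|E]; auto. exfalso; apply Hno; exists z; auto. }
    destruct (continuity_ab_min (PSeries c) a b ltac:(lra)) as [xm [Hm Hxm]].
    { intros z Hz. apply PSeries_continuity, rad; auto. }
    set (m := PSeries c xm).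
    assert (Hm0 : 0 < m) by (apply Hp'; auto).
    assert (Hb1 : Rabs b < 1) by (apply HIa; lra).
    destruct (pow_lt_1_zero b Hb1 (m / 2) ltac:(lra)) as [N0 HN0].
    set (K := Nat.max N0 (S n)).
    assert (Base : forall k, (K <= k)%nat -> c k = -1).
    { intros k Hk.
      set (h := fun i => if Nat.eqb i k then -1 else c i).
      assert (Ah : Adm p n a b h).
      { split; [|split].
        - intros i Hi. unfold h. destruct (Nat.eqb_spec i k); [lia|auto].
        - intros i Hi. unfold h. destruct (Nat.eqb_spec i k); [apply trit_m1|auto].
        - intros z Hz. pose proof (HI z Hz) as Hz1.
          assert (Hle : PSeries (fun i => c i + (-2) * ek k i) z <= PSeries h z).
          { apply PS_mono; auto using bnd_add, bnd_sc, bnd_ek.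
            - apply bnd_of. intros i; unfold h. destruct (Nat.eqb i k); [lra|auto].
            - intros i; unfold h, ek. destruct (Nat.eqb_spec i k).
              + specialize (Cb i); lra.
              + lra. }
          rewrite PS_add, PS_sc, PS_ek in Hle by auto using bnd_sc, bnd_ek.
          specialize (HN0 k ltac:(lia)). rewrite Rabs_pos_eq in HN0 by (apply pow_le; lra).
          assert (z ^ k <= b ^ k) by (apply pow_incr; lra).
          specialize (Hm z Hz). fold m in Hm. lra. }
      assert (T := Cmin k h Ah). unfold h in T. rewrite Nat.eqb_refl in T.
      specialize (T ltac:(intros i Hi; destruct (Nat.eqb_spec i k); [lia|auto])).
      specialize (Cb k). lra. }
    assert (Back : forall d, (d <= K - S n)%nat -> forall i, (K - d <= i)%nat -> c i = -1).
    { induction d as [|d IH]; intros Hd i Hi.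
      - apply Base; lia.
      - destruct (le_lt_dec (K - d) i) as [Hi2|Hi2]. apply IH; lia.
        assert (Ei : i = (K - S d)%nat) by lia. subst i.
        set (k := (K - S d)%nat) in *.
        assert (Hkdef : k = (K - S d)%nat) by reflexivity.
        assert (HKdef : K = Nat.max N0 (S n)) by reflexivity.
        assert (Hkn : (n < k)%nat) by lia.
        destruct (classic (c k = -1)) as [|Hne]; auto. exfalso.
        assert (Hck : c k = 0 \/ c k = 1) by (destruct (C2 k Hkn) as [|[|]]; auto; contradiction).
        set (h := fun i => if Nat.ltb i k then c i else if Nat.eqb i k then c k - 1 else 1).
        assert (Ah : Adm p n a b h).
        { split; [|split].
          - intros i Hi'. unfold h. destruct (Nat.ltb_spec i k); [auto|lia].
          - intros i Hi'. unfold h. destruct (Nat.ltb_spec i k); [auto|].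
            destruct (Nat.eqb_spec i k). destruct Hck as [E|E]; rewrite E; unfold trit; lra.
            right; right; reflexivity.
          - intros z Hz. pose proof (HI z Hz) as Hz1.
            rewrite (PSeries_ext h (fun i => (c i + (-1) * ek k i) + 2 * ind (S k) i)).
            2:{ intros i. unfold h, ek, ind. destruct (Nat.ltb_spec i k); destruct (Nat.eqb_spec i k) as [Eik|Nik];
                destruct (Nat.leb_spec (S k) i); try lia; try ring.
                all: try (rewrite Eik; ring).
                all: rewrite IH by lia; ring. }
            rewrite !PS_add, !PS_sc, PS_ek, PS_ind by auto using bnd_add, bnd_sc, bnd_ek, bnd_ind.
            specialize (C3 z Hz).
            assert (z ^ k <= 2 * (z ^ S k / (1 - z))).
            { simpl. assert (0 <= z ^ k) by (apply pow_le; lra).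
              apply Rmult_le_reg_r with (1 - z). lra.
              unfold Rdiv. replace (2 * (z * z ^ k * / (1 - z)) * (1 - z)) with (2 * z * z ^ k) by (field; lra).
              nra. }
            lra. }
        assert (T := Cmin k h Ah). unfold h in T. rewrite Nat.ltb_irrefl, Nat.eqb_refl in T.
        specialize (T ltac:(intros i Hi'; destruct (Nat.ltb_spec i k); [auto|lia])). lra. }
    assert (Tail : forall i, (n < i)%nat -> c i = -1).
    { intros i Hi. apply (Back (K - S n)%nat (le_n _)). lia. }
    assert (Hy' : a <= y <= b) by lra.
    specialize (C3 y Hy'). pose proof (HI y Hy') as Hy1.
    rewrite (PSeries_ext c (fun i => p i + (-1) * ind (S n) i)) in C3.
    2:{ intros i. unfold ind. destruct (Nat.leb_spec (S n) i).
        rewrite Tail, Hpz by lia. ring. rewrite C1 by lia. ring. }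
    rewrite PS_add, PS_sc, PS_ind, (PS_poly n p y) in C3 by auto using bnd_sc, bnd_ind.
    rewrite Nat.add_1_r in Hyneg. lra.
Qed.
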